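(* Let $n\ge1$, $q$ a prime power, and let $(\mathsf{Enc},\mathcal{A})$ be any $n$-party one-round aggregation protocol over $\mathbb{F}_q$ in the anonymized model with encoder $\mathsf{Enc}:\mathbb{F}_q\to[\ell]^m$. Then for each $s\in\mathbb{F}_q$ there exist $\mathbf{x},\mathbf{x}'\in\mathcal{B}_s$ such that $$\mathrm{SD}\left(\mathcal{S}^{\mathsf{Enc}}_{\mathbf{x}},\mathcal{S}^{\mathsf{Enc}}_{\mathbf{x}'}\right)\ge1-\frac{n^{nm}}{q^{n-1}}.$$
   Context: $\mathcal{B}_s=\{\mathbf{x}\in\mathbb{F}_q^n:\sum_ix_i=s\}$; $\mathrm{SD}$ is statistical distance. An $n$-party one-round aggregation protocol over $\mathbb{F}_q$ with $m$ messages per party consists of a randomized encoder $\mathsf{Enc}:\mathbb{F}_q\to[\ell]^m$ (for some positive integer $\ell$; each party applies it to its input with independent randomness) and an analyzer $\mathcal{A}:[\ell]^{nm}\to\mathbb{F}_q$ such that for every $\mathbf{x}\in\mathbb{F}_q^n$, every possible realization of the encodings $\mathsf{Enc}(x_1),\dots,\mathsf{Enc}(x_n)$, and every permutation $\pi$ of $[nm]$, the analyzer applied to the concatenation $(\mathsf{Enc}(x_1),\dots,\mathsf{Enc}(x_n))$ with coordinates permuted by $\pi$ outputs $\sum_i x_i$. $\mathcal{S}^{\mathsf{Enc}}_{\mathbf{x}}$ is the distribution on $[\ell]^{nm}$ of this concatenation after applying an independent uniformly random permutation of the $nm$ coordinates. *)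

(* Defs.v *)
From HB Require Import structures.
From mathcomp Require Import all_boot all_order all_algebra all_fingroup all_field.
Set Implicit Arguments. Unset Strict Implicit. Unset Printing Implicit Defensive.
Import Order.TTheory GRing.Theory Num.Theory.
Local Open Scope ring_scope.

(* A message is an element of [l] = 'I_l; an encoding of one party is an
   m-vector of messages; the full transcript is indexed by 'I_n * 'I_m
   (a set of size n*m; coordinate (i,j) = j-th message of party i). *)
Definition enc_t (l m : nat) := {ffun 'I_m -> 'I_l}.
Definition transcript (n m l : nat) := {ffun 'I_n * 'I_m -> 'I_l}.

Definition is_distr (R : realFieldType) (T : finType) (D : T -> R) :=
  (forall t, 0 <= D t) /\ \sum_t D t = 1.

Definition is_encoder (R : realFieldType) (F : finFieldType) (l m : nat)
  (Enc : F -> enc_t l m -> R) := forall a, is_distr (Enc a).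

Definition concat_enc (n m l : nat) (e : {ffun 'I_n -> enc_t l m}) :
  transcript n m l := [ffun p : 'I_n * 'I_m => e p.1 p.2].

Definition permute (n m l : nat) (pi : {perm 'I_n * 'I_m})
  (w : transcript n m l) : transcript n m l := [ffun k => w (pi k)].

Definition is_aggregation_protocol (R : realFieldType) (F : finFieldType)
  (n m l : nat) (Enc : F -> enc_t l m -> R) (A : transcript n m l -> F) :=
  is_encoder Enc /\
  forall (x : {ffun 'I_n -> F}) (e : {ffun 'I_n -> enc_t l m}),
    (forall i, 0 < Enc (x i) (e i)) ->
    forall pi : {perm 'I_n * 'I_m}, A (permute pi (concat_enc e)) = \sum_i x i.

(* The shuffled distribution S^Enc_x: independent encodings followed by a
   uniformly random permutation of the n*m coordinates. *)
Definition shuffled (R : realFieldType) (F : finFieldType) (n m l : nat)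
  (Enc : F -> enc_t l m -> R) (x : {ffun 'I_n -> F}) (y : transcript n m l) : R :=
  \sum_(e : {ffun 'I_n -> enc_t l m}) \sum_(pi : {perm 'I_n * 'I_m})
     (\prod_i Enc (x i) (e i)) / #|{perm 'I_n * 'I_m}|%:R
       * (permute pi (concat_enc e) == y)%:R.

Definition SD (R : realFieldType) (T : finType) (P Q : T -> R) : R :=
  2^-1 * \sum_t `|P t - Q t|.

Definition in_B (F : finFieldType) (n : nat) (s : F) (x : {ffun 'I_n -> F}) :=
  \sum_i x i = s.

(* Main.v *)
Require Import Defs.
From HB Require Import structures.
From mathcomp Require Import all_boot all_order all_algebra all_fingroup all_field.
From mathcomp Require Import ring lra.
Set Implicit Arguments. Unset Strict Implicit.
Import Order.TTheory GRing.Theory Num.Theory.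
Local Open Scope ring_scope.

Lemma key_inj (R : realFieldType) (F : finFieldType) (n m l : nat)
  (Enc : F -> enc_t l m -> R) (A : transcript n m l -> F) :
  is_aggregation_protocol Enc A ->
  forall (x1 x2 : {ffun 'I_n -> F}) (e1 e2 : {ffun 'I_n -> enc_t l m})
    (pi1 pi2 : {perm 'I_n * 'I_m}),
  (forall i, 0 < Enc (x1 i) (e1 i)) -> (forall i, 0 < Enc (x2 i) (e2 i)) ->
  permute pi1 (concat_enc e1) = permute pi2 (concat_enc e2) ->
  (forall k, (pi1 k).1 = (pi2 k).1) -> x1 = x2.
Proof.
move=> [_ HA] x1 x2 e1 e2 pi1 pi2 P1 P2 Heq Hg; apply/ffunP => i.
pose f k := if (pi1 k).1 == i then pi2 k else pi1 k.
have finj : injective f.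
  move=> k1 k2; rewrite /f.
  case: ifP => /eqP h1; case: ifP => /eqP h2 E.
  - exact: (perm_inj E).
  - by case: h2; rewrite -E -Hg.
  - by case: h1; rewrite E -Hg.
  - exact: (perm_inj E).
pose sigma := perm finj.
pose e3 : {ffun 'I_n -> enc_t l m} := [ffun j => if j == i then e2 j else e1 j].
pose z : {ffun 'I_n -> F} := [ffun j => if j == i then x2 j else x1 j].
have P3 : forall j, 0 < Enc (z j) (e3 j).
  by move=> j; rewrite !ffunE; case: (j == i).
have E3 : permute sigma (concat_enc e3) = permute pi1 (concat_enc e1).
  apply/ffunP => k; rewrite ffunE permE /f [RHS]ffunE.
  case: (eqVneq (pi1 k).1 i) => Hk.
    have Hk2 : (pi2 k).1 = i by rewrite -Hg.
    have := congr1 (fun w : transcript n m l => w k) Heq; rewrite !ffunE => ->.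
    by rewrite Hk2 eqxx.
  by rewrite !ffunE (negPf Hk).
have S1 := HA x1 e1 P1 pi1.
have S3 := HA z e3 P3 sigma.
rewrite E3 S1 in S3.
move: S3; rewrite (bigD1 i) //= [in RHS](bigD1 i) //= ffunE eqxx.
rewrite [X in _ = _ + X](eq_bigr (fun j => x1 j)).
  by move=> H; apply: (@addIr _ (\sum_(j < n | j != i) x1 j)).
by move=> j /negPf Hj; rewrite ffunE Hj.
Qed.

Lemma card_supp (R : realFieldType) (F : finFieldType) (n m l : nat)
  (Enc : F -> enc_t l m -> R) (A : transcript n m l -> F) (y : transcript n m l) :
  is_aggregation_protocol Enc A ->
  (#|[set x : {ffun 'I_n -> F} | shuffled Enc x y != 0%R]| <= n ^ (n * m))%N.
Proof.
move=> HP; have HE := HP.1.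
pose P (x : {ffun 'I_n -> F})
    (p : {ffun 'I_n -> enc_t l m} * {perm 'I_n * 'I_m}) :=
  [forall i, 0 < Enc (x i) (p.1 i)] && (permute p.2 (concat_enc p.1) == y).
have sup x : shuffled Enc x y != 0 -> exists p, P x p.
  move=> H; case: (pickP (P x)) => [p Hp|Hn]; first by exists p.
  exfalso; move/eqP: H; apply; rewrite /shuffled.
  apply: big1 => e _; apply: big1 => pi _.
  have := Hn (e, pi); rewrite /P /=.
  case: eqP => [Hy|_]; last by rewrite mulr0.
  rewrite andbT => /negbT/forallPn [i]; rewrite -leNgt => Hi.
  have E0 : Enc (x i) (e i) = 0.
    by apply/le_anti; rewrite Hi; case: (HE (x i)) => H0 _; exact: H0.
  by rewrite (bigD1 i) //= E0 !mul0r.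
pose g (x : {ffun 'I_n -> F}) : {ffun 'I_n * 'I_m -> 'I_n} :=
  if [pick p | P x p] is Some p then [ffun k => (p.2 k).1] else [ffun k => k.1].
rewrite -(card_in_imset (f := g)).
  apply: leq_trans (max_card _) _.
  by rewrite card_ffun card_prod !card_ord.
move=> x1 x2; rewrite !inE => /sup [p1 Hp1] /sup [p2 Hp2].
rewrite /g; case: pickP => [q1 Hq1|/(_ p1)]; last by rewrite Hp1.
case: pickP => [q2 Hq2|/(_ p2)]; last by rewrite Hp2.
move=> Hgg.
move: Hq1 Hq2; rewrite /P => /andP [/forallP F1 /eqP E1] /andP [/forallP F2 /eqP E2].
apply: (key_inj HP F1 F2 (pi1 := q1.2) (pi2 := q2.2)).
  by rewrite E1 E2.
by move=> k; have := congr1 (fun h : {ffun 'I_n * 'I_m -> 'I_n} => h k) Hgg; rewrite !ffunE.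
Qed.
Lemma card_perm_gt0 (T : finType) : (0 < #|{perm T}|)%N.
Proof. by apply/card_gt0P; exists 1%g. Qed.

Lemma shuffled_ge0 (R : realFieldType) (F : finFieldType) (n m l : nat)
  (Enc : F -> enc_t l m -> R) (x : {ffun 'I_n -> F}) (y : transcript n m l) : is_encoder Enc -> 0 <= shuffled Enc x y.
Proof.
move=> HE; rewrite /shuffled; apply: sumr_ge0 => e _; apply: sumr_ge0 => pi _.
apply: mulr_ge0; last by rewrite ler0n.
apply: mulr_ge0; last by rewrite invr_ge0 ler0n.
by apply: prodr_ge0 => i _; case: (HE (x i)).
Qed.

Lemma shuffled_sum1 (R : realFieldType) (F : finFieldType) (n m l : nat)
  (Enc : F -> enc_t l m -> R) (x : {ffun 'I_n -> F}) : is_encoder Enc -> \sum_y shuffled Enc x y = 1.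
Proof.
move=> HE; rewrite /shuffled exchange_big /=.
transitivity (\sum_(e : {ffun 'I_n -> enc_t l m}) \prod_i Enc (x i) (e i)).
  apply: eq_bigr => e _; rewrite exchange_big /=.
  transitivity (\sum_(pi : {perm 'I_n * 'I_m})
      (\prod_i Enc (x i) (e i)) / #|{perm 'I_n * 'I_m}|%:R).
    apply: eq_bigr => pi _; rewrite -mulr_sumr.
    rewrite (bigD1 (permute pi (concat_enc e))) //= eqxx.
    rewrite [X in 1 + X]big1 ?addr0 ?mulr1 //.
    by move=> y /negPf; rewrite eq_sym => ->.
  rewrite sumr_const -(mulr_natr (\prod_i Enc (x i) (e i) / _)) divfK //.
  by rewrite pnatr_eq0 -lt0n card_perm_gt0.
transitivity (\prod_(i < n) \sum_(t : enc_t l m) Enc (x i) t).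
  by rewrite bigA_distr_bigA.
by apply: big1 => i _; case: (HE (x i)).
Qed.

Lemma SD_lb (R : realFieldType) (T : finType) (P Q : T -> R) :
  (forall t, 0 <= P t) -> (forall t, 0 <= Q t) ->
  \sum_t P t = 1 -> \sum_t Q t = 1 ->
  1 - \sum_t P t * (Q t != 0)%:R <= SD P Q.
Proof.
move=> P0 Q0 P1 Q1; rewrite /SD.
have H : \sum_t (P t + Q t - 2 * (P t * (Q t != 0)%:R)) <= \sum_t `|P t - Q t|.
  apply: ler_sum => t _; case: eqP => [->|_].
    rewrite mulr0 subr0 ger0_norm //; lra.
  rewrite mulr1 distrC; apply: le_trans (ler_norm _); lra.
move: H; rewrite sumrB big_split /= P1 Q1 -mulr_sumr => H.
have -> : 1 - \sum_t P t * (Q t != 0)%:R = 2^-1 * (1 + 1 - 2 * \sum_t P t * (Q t != 0)%:R).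
  by field.
by apply: ler_wpM2l => //; rewrite invr_ge0 ler0n.
Qed.

Lemma card_B (F : finFieldType) (n : nat) (s : F) : (1 <= n)%N ->
  (#|F| ^ n.-1 <= #|[set x : {ffun 'I_n -> F} | (\sum_i x i)%R == s]|)%N.
Proof.
case: n => // n _ /=.
pose h (f : {ffun 'I_n -> F}) : {ffun 'I_n.+1 -> F} :=
  [ffun i => if unlift ord_max i is Some j then f j else s - \sum_j f j].
have hinj : injective h.
  move=> f1 f2 H; apply/ffunP => j.
  by have := congr1 (fun g : {ffun 'I_n.+1 -> F} => g (lift ord_max j)) H; rewrite !ffunE liftK.
have -> : (#|F| ^ n = #|h @: [set: {ffun 'I_n -> F}]|)%N.
  by rewrite card_imset // cardsT card_ffun card_ord.
apply: subset_leq_card; apply/subsetP => x /imsetP [f _ ->].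
rewrite inE (bigD1_ord ord_max) //= !ffunE unlift_none.
rewrite [X in _ + X](eq_bigr (fun j => f j)) ?subrK //.
by move=> j _; rewrite ffunE liftK.
Qed.

Theorem mainTheorem14 (R : realFieldType) (F : finFieldType) (n m l : nat)
  (Enc : F -> enc_t l m -> R) (A : transcript n m l -> F) :
  (1 <= n)%N -> (0 < l)%N ->
  is_aggregation_protocol Enc A ->
  forall s : F, exists x x' : {ffun 'I_n -> F},
    [/\ in_B s x, in_B s x' &
     1 - (n ^ (n * m))%:R / (#|F| ^ n.-1)%:R
       <= SD (shuffled Enc x) (shuffled Enc x')].
Proof.
move=> n1 l0 HP s; have HE := HP.1.
set B := [set x : {ffun 'I_n -> F} | \sum_i x i == s].
set N := (n ^ (n * m))%N; set Q := (#|F| ^ n.-1)%N.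
have cB : (Q <= #|B|)%N by apply: card_B.
have Q0 : (0 < Q)%N by rewrite expn_gt0; apply/orP; left; apply/card_gt0P; exists 0.
have [x0 Bx0] : exists x0, x0 \in B.
  by apply/card_gt0P; apply: leq_trans cB.
pose c (x' : {ffun 'I_n -> F}) :=
  \sum_y shuffled Enc x0 y * (shuffled Enc x' y != 0)%:R.
have c0 x' : 0 <= c x'.
  by apply: sumr_ge0 => y _; apply: mulr_ge0; [exact: shuffled_ge0|rewrite ler0n].
have Hsum : \sum_(x' in B) c x' <= N%:R.
  apply: (@le_trans _ _ (\sum_x' c x')).
    rewrite [X in _ <= X](bigID (fun x' => x' \in B)) /= lerDl.
    by apply: sumr_ge0 => x' _.
  rewrite /c exchange_big /=.
  apply: (@le_trans _ _ (\sum_y shuffled Enc x0 y * N%:R)).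
    apply: ler_sum => y _; rewrite -mulr_sumr; apply: ler_wpM2l.
      exact: shuffled_ge0.
    apply: (@le_trans _ _
      (#|[set x : {ffun 'I_n -> F} | shuffled Enc x y != 0]|%:R)); last first.
      by rewrite ler_nat (card_supp y HP).
    rewrite -sum1dep_card natr_sum.
    by rewrite [X in _ <= X]big_mkcond; apply: ler_sum => x' _; case: (_ != _).
  by rewrite -mulr_suml shuffled_sum1 // mul1r.
have [x' Bx' Hc] : exists2 x', x' \in B & c x' <= N%:R / Q%:R.
  case: (boolP [exists x' in B, c x' <= N%:R / Q%:R]).
    by move=> /existsP [x' /andP [H1 H2]]; exists x'.
  rewrite negb_exists => /forallP Hn.
  have Hlt : \sum_(x' in B) (N%:R / Q%:R) < \sum_(x' in B) c x'.
    apply: ltr_sum.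
      by apply/hasP; exists x0; rewrite ?mem_index_enum.
    by move=> x' Bx'; have := Hn x'; rewrite Bx' /= -ltNge.
  exfalso; move: (lt_le_trans Hlt Hsum); rewrite sumr_const -(mulr_natr (N%:R / Q%:R)).
  apply/negP; rewrite -leNgt.
  have QR : 0 < Q%:R :> R by rewrite ltr0n.
  apply: (@le_trans _ _ (N%:R / Q%:R * Q%:R)).
    by rewrite divfK // gt_eqF.
  apply: ler_wpM2l; last by rewrite ler_nat.
  by apply: divr_ge0; rewrite ler0n.
exists x0, x'; split; first by move: Bx0; rewrite inE => /eqP.
  by move: Bx'; rewrite inE => /eqP.
apply: le_trans (SD_lb _ _ _ _); last 4 first.
- by move=> t; apply: shuffled_ge0.
- by move=> t; apply: shuffled_ge0.
- exact: shuffled_sum1.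
- exact: shuffled_sum1.
by rewrite lerB.
Qed.
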